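(* Let $S$ be a graded reduced affine monoid, $\tilde S$, $\kappa,\delta$, and the orders $\prec$ on $M$ and $\tilde M$ as in the context. Suppose $\{(x^{\lambda},x^{\mu})\mid(\lambda,\mu)\in\Lambda\}$ is a Gröbner system of $\sim_S$ with respect to $\prec$. Then $\Gamma_1\cup\Gamma_2\cup\Gamma_3$ is a Gröbner system of $\sim_{\tilde S}$ with respect to $\prec$ on $\tilde M$, where $\Gamma_1=\{(x^{\lambda},x^{\mu})\mid\lambda,\mu\in\mathbb{N}_0^{\mathcal{A}(\tilde S)},\ (\kappa(\lambda),\kappa(\mu))\in\Lambda,\ \delta(\lambda)=\delta(\mu)\}$, $\Gamma_2=\{(x_{a[i]}x_{b[j]},x_{a[i-1]}x_{b[j+1]})\mid a,b\in\mathcal{A}(S),\ x_a\prec x_b,\ 0<i\le|a|,\ 0\le j<|b|\}$, $\Gamma_3=\{(x_{a[i]}x_{a[j]},x_{a[i-1]}x_{a[j+1]})\mid a\in\mathcal{A}(S),\ 0<i\le j<|a|\}$.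
   Context: A monoid is a commutative cancellative semigroup with identity; affine: finitely generated submonoid of a finitely generated free abelian group; reduced: only unit is the identity. $S$ is graded: $S=\bigsqcup_{d\in\mathbb{N}_0}S_d$, $S_dS_e\subseteq S_{d+e}$, $|s|=d$ for $s\in S_d$. $\mathcal{A}(S)$ is its set of atoms. $M$ is the free commutative monoid on $x_a$ ($a\in\mathcal{A}(S)$), elements $x^{\alpha}$, and $\sim_S$ the congruence $x^{\alpha}\sim_S x^{\gamma}$ iff $\prod a^{\alpha(a)}=\prod a^{\gamma(a)}$ in $S$. $\tilde S=\{s[i]\mid s\in S,0\le i\le|s|\}$ with $s[i]t[j]=(st)[i+j]$; its atoms are $a[i]$, $a\in\mathcal{A}(S)$, $0\le i\le|a|$; $\tilde M$ is the free commutative monoid on $x_{a[i]}$ and $\sim_{\tilde S}$ its defining congruence (defined analogously). $\kappa(\lambda)(a)=\sum_{i=0}^{|a|}\lambda(a[i])$, $\delta(\lambda)=\sum i\,\lambda(a[i])$. An admissible total order on a free commutative monoid is a total order with $x\prec y\Rightarrow xz\prec yz$ and $1\prec x$ for $x\neq1$. A finite $\Lambda\subset M\times M$ is a Gröbner system of a congruence $\sim$ if $x\sim y$ and $y\prec x$ for all $(x,y)\in\Lambda$, and every $z$ not divisible by any first component $x$ of a pair in $\Lambda$ is $\prec$-minimal in its $\sim$-class. Fix an admissible total order $\prec$ on $M$; enumerate $\mathcal{A}(S)=\{a_1,\dots,a_n\}$ with $x_{a_1}\prec\cdots\prec x_{a_n}$, $d_i=|a_i|$. Order $\tilde M$ by: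 $x^{\mu}\prec x^{\lambda}$ iff either $x^{\kappa(\mu)}\prec x^{\kappa(\lambda)}$ in $M$, or $\kappa(\mu)=\kappa(\lambda)$ and the sequence $(\mu(a_1[0]),\dots,\mu(a_1[d_1]),\mu(a_2[0]),\dots,\mu(a_n[d_n]))$ is lexicographically greater than $(\lambda(a_1[0]),\dots,\lambda(a_1[d_1]),\lambda(a_2[0]),\dots,\lambda(a_n[d_n]))$. *)

(* Defs.v *)
From HB Require Import structures.
From mathcomp Require Import all_boot all_order all_algebra.
Set Implicit Arguments. Unset Strict Implicit. Unset Printing Implicit Defensive.
Import Order.TTheory GRing.Theory Num.Theory.
Local Open Scope ring_scope.

Definition vec (r : nat) := 'rV[int]_r.

Definition submonoid r (S : vec r -> Prop) : Prop :=
  S 0 /\ (forall x y, S x -> S y -> S (x + y)).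

Definition fin_generated r (S : vec r -> Prop) : Prop :=
  exists g : seq (vec r), (forall y, y \in g -> S y) /\
    forall x, S x -> exists l : seq (vec r),
      (forall y, y \in l -> y \in g) /\ x = \sum_(y <- l) y.

Definition affine_monoid r (S : vec r -> Prop) : Prop :=
  submonoid S /\ fin_generated S.

Definition reduced r (S : vec r -> Prop) : Prop :=
  forall x, S x -> S (- x) -> x = 0.

(* grading: S = disjoint union of S_d with S_d S_e in S_{d+e} *)
Definition grading r (S : vec r -> Prop) (deg : vec r -> nat) : Prop :=
  forall x y, S x -> S y -> deg (x + y) = (deg x + deg y)%N.

Definition is_atom r (S : vec r -> Prop) (a : vec r) : Prop :=
  S a /\ a <> 0 /\
  forall x y, S x -> S y -> a = x + y -> x = 0 \/ y = 0.

Definition mono (I : finType) := {ffun I -> nat}.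

Definition mone (I : finType) : mono I := [ffun _ => 0%N].
Definition mmul (I : finType) (x y : mono I) : mono I := [ffun i => (x i + y i)%N].
Definition mvar (I : finType) (i : I) : mono I := [ffun j => nat_of_bool (j == i)].
Definition mdiv (I : finType) (x z : mono I) : Prop := forall i, (x i <= z i)%N.

Definition admissible (I : finType) (lt : mono I -> mono I -> Prop) : Prop :=
  [/\ (forall x, ~ lt x x),
      (forall x y z, lt x y -> lt y z -> lt x z),
      (forall x y, x <> y -> lt x y \/ lt y x),
      (forall x y z, lt x y -> lt (mmul x z) (mmul y z)) &
      (forall x, x <> mone I -> lt (mone I) x)].

Definition groebner_system (I : finType) (lt : mono I -> mono I -> Prop)
    (equiv : mono I -> mono I -> Prop) (Lam : mono I * mono I -> Prop) : Prop :=
  [/\ (exists s : seq (mono I * mono I), forall p, Lam p <-> p \in s),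
      (forall p, Lam p -> equiv p.1 p.2 /\ lt p.2 p.1) &
      (forall z, (forall p, Lam p -> ~ mdiv p.1 z) ->
         forall w, equiv z w -> ~ lt w z)].

Definition evalS r n (a : 'I_n -> vec r) (al : mono 'I_n) : vec r :=
  \sum_(k : 'I_n) a k *+ al k.

Definition simS r n (a : 'I_n -> vec r) (al ga : mono 'I_n) : Prop :=
  evalS a al = evalS a ga.

(* index set of the atoms a_k[i] of S~, 0 <= i <= d k = |a_k| *)
Definition tidx n (d : 'I_n -> nat) := {k : 'I_n & 'I_(d k).+1}.

(* the element s[i] of S~ is represented by the pair (s, i);
   s[i] t[j] = (st)[i+j] *)
Definition evalSt r n (a : 'I_n -> vec r) (d : 'I_n -> nat)
    (la : mono (tidx d)) : vec r * nat :=
  (\sum_(p : tidx d) a (tag p) *+ la p, (\sum_(p : tidx d) la p * tagged p)%N).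

Definition simSt r n (a : 'I_n -> vec r) (d : 'I_n -> nat)
    (la mu : mono (tidx d)) : Prop :=
  evalSt a la = evalSt a mu.

Definition kappa n (d : 'I_n -> nat) (la : mono (tidx d)) : mono 'I_n :=
  [ffun k => (\sum_(p : tidx d | tag p == k) la p)%N].

Definition delta n (d : 'I_n -> nat) (la : mono (tidx d)) : nat :=
  (\sum_(p : tidx d) tagged p * la p)%N.

(* position order in the sequence a_1[0],...,a_1[d_1],a_2[0],...,a_n[d_n] *)
Definition pos_lt n (d : 'I_n -> nat) (p q : tidx d) : bool :=
  (tag p < tag q)%N || ((tag p == tag q) && (val (tagged p) < val (tagged q))%N).

Definition lex_gt n (d : 'I_n -> nat) (mu la : mono (tidx d)) : Prop :=
  exists p, (la p < mu p)%N /\ forall q, pos_lt q p -> mu q = la q.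

Definition tlt n (d : 'I_n -> nat) (ltM : mono 'I_n -> mono 'I_n -> Prop)
    (mu la : mono (tidx d)) : Prop :=
  ltM (kappa mu) (kappa la) \/ (kappa mu = kappa la /\ lex_gt mu la).

Definition Gamma1 n (d : 'I_n -> nat) (Lam : mono 'I_n * mono 'I_n -> Prop)
    (pr : mono (tidx d) * mono (tidx d)) : Prop :=
  Lam (kappa pr.1, kappa pr.2) /\ delta pr.1 = delta pr.2.

Definition Gamma2 n (d : 'I_n -> nat) (ltM : mono 'I_n -> mono 'I_n -> Prop)
    (pr : mono (tidx d) * mono (tidx d)) : Prop :=
  exists p p' q q' : tidx d,
    tag p = tag p' /\ tag q = tag q' /\ ltM (mvar (tag p)) (mvar (tag q)) /\
        val (tagged p) = (val (tagged p')).+1 /\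
        val (tagged q') = (val (tagged q)).+1 /\
        pr = (mmul (mvar p) (mvar q), mmul (mvar p') (mvar q')).

Definition Gamma3 n (d : 'I_n -> nat)
    (pr : mono (tidx d) * mono (tidx d)) : Prop :=
  exists p p' q q' : tidx d,
    tag p = tag p' /\ tag q = tag p /\ tag q' = tag p /\
        val (tagged p) = (val (tagged p')).+1 /\
        val (tagged q') = (val (tagged q)).+1 /\
        (val (tagged p) <= val (tagged q))%N /\
        pr = (mmul (mvar p) (mvar q), mmul (mvar p') (mvar q')).

(* Main.v *)
Require Import Defs.
From mathcomp Require Import all_boot all_order all_algebra.
From mathcomp Require Import zify.
From Stdlib Require Import ClassicalEpsilon.
Set Implicit Arguments. Unset Strict Implicit. Unset Printing Implicit Defensive.

Lemma kappaE n (d : 'I_n -> nat) (la : mono (tidx d)) k :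
  kappa la k = \sum_(p : tidx d | tag p == k) la p.
Proof. by rewrite ffunE. Qed.

Lemma sum_tag n (d : 'I_n -> nat) (F : 'I_n -> nat) (la : mono (tidx d)) :
  \sum_(p : tidx d) F (tag p) * la p = \sum_k F k * kappa la k.
Proof.
rewrite (partition_big (fun p : tidx d => tag p) xpredT) //=.
apply: eq_bigr => k _; rewrite kappaE big_distrr /=.
by apply: eq_bigr => p /eqP <-.
Qed.

Lemma evalSt1 r n (a : 'I_n -> vec r) (d : 'I_n -> nat) la :
  (@evalSt r n a d la).1 = evalS a (kappa la).
Proof.
rewrite /evalSt /evalS /=.
rewrite (partition_big (fun p : tidx d => tag p) xpredT) //=.
apply: eq_bigr => k _; rewrite kappaE -GRing.sumrMnr.
by apply: eq_bigr => p /eqP <-.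
Qed.

Lemma evalSt2 r n (a : 'I_n -> vec r) (d : 'I_n -> nat) la :
  (@evalSt r n a d la).2 = delta la.
Proof. by rewrite /delta; apply: eq_bigr => p _; rewrite mulnC. Qed.

Lemma simStE r n (a : 'I_n -> vec r) (d : 'I_n -> nat) z w :
  @simSt r n a d z w <-> evalS a (kappa z) = evalS a (kappa w) /\ delta z = delta w.
Proof.
rewrite /simSt [evalSt a z]surjective_pairing [evalSt a w]surjective_pairing.
rewrite !evalSt1 !evalSt2; split; first by case=> -> ->.
by case=> -> ->.
Qed.

Lemma sum_eq1 (T : finType) (P : pred T) p :
  \sum_(q | P q) nat_of_bool (q == p) = P p.
Proof.
case Pp: (P p).
  by rewrite (bigD1 p) //= eqxx big1 ?addn0 // => q /andP [_ /negbTE ->].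
by rewrite big1 // => q Pq; case: eqP => // e; move: Pq; rewrite e Pp.
Qed.

Lemma sum_eq1F (T : finType) (F : T -> nat) p :
  \sum_q F q * nat_of_bool (q == p) = F p.
Proof.
by rewrite (bigD1 p) //= eqxx muln1 big1 ?addn0 // => q /negbTE ->; rewrite muln0.
Qed.

Lemma kappa_mmul n (d : 'I_n -> nat) (x y : mono (tidx d)) :
  kappa (mmul x y) = mmul (kappa x) (kappa y).
Proof.
apply/ffunP => k; rewrite !ffunE -big_split; apply: eq_bigr => p _.
by rewrite ffunE.
Qed.

Lemma kappa_mvar n (d : 'I_n -> nat) (p : tidx d) :
  kappa (mvar p) = mvar (tag p).
Proof.
apply/ffunP => k; rewrite [LHS]ffunE [RHS]ffunE.
rewrite (eq_bigr (fun q => nat_of_bool (q == p))); last by move=> q _; rewrite ffunE.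
by rewrite sum_eq1 eq_sym.
Qed.

Lemma delta_mmul n (d : 'I_n -> nat) (x y : mono (tidx d)) :
  delta (mmul x y) = delta x + delta y.
Proof.
rewrite /delta -big_split; apply: eq_bigr => p _; by rewrite ffunE mulnDr.
Qed.

Lemma delta_mvar n (d : 'I_n -> nat) (p : tidx d) :
  delta (mvar p) = tagged p.
Proof.
rewrite /delta (eq_bigr (fun q : tidx d => (tagged q : nat) * nat_of_bool (q == p))).
  by rewrite (sum_eq1F (fun q : tidx d => (tagged q : nat))).
by move=> q _; rewrite ffunE.
Qed.

Lemma tidx_eq n (d : 'I_n -> nat) (p q : tidx d) :
  tag p = tag q -> (tagged p : nat) = tagged q -> p = q.
Proof.
case: p => k i; case: q => l j /= e; subst l => /val_inj -> //.
Qed.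

Lemma ltM_tag n (ltM : mono 'I_n -> mono 'I_n -> Prop) (k l : 'I_n) :
  admissible ltM -> (forall k l : 'I_n, (k < l)%N -> ltM (mvar k) (mvar l)) ->
  ltM (mvar k) (mvar l) -> (k < l)%N.
Proof.
case=> irr tr _ _ _ hlt h.
case: (ltngtP k l) => // h2.
  by case: (irr _ (tr _ _ _ h (hlt _ _ h2))).
have e : k = l by apply: val_inj.
by subst l; case: (irr _ h).
Qed.

Lemma pos_lt_irr n (d : 'I_n -> nat) (p : tidx d) : ~~ pos_lt p p.
Proof. by rewrite /pos_lt ltnn eqxx ltnn. Qed.

Lemma pair_ok r n (a : 'I_n -> vec r) (d : 'I_n -> nat)
    (ltM : mono 'I_n -> mono 'I_n -> Prop) (p p' q q' : tidx d) :
  tag p = tag p' -> tag q = tag q' -> (tagged p : nat) = (tagged p').+1 ->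
  (tagged q' : nat) = (tagged q).+1 ->
  ~~ pos_lt q p' -> q != p' ->
  simSt a (mmul (mvar p) (mvar q)) (mmul (mvar p') (mvar q')) /\
  tlt ltM (mmul (mvar p') (mvar q')) (mmul (mvar p) (mvar q)).
Proof.
move=> ep eq e1 e2 hq hqp.
have ek : kappa (mmul (mvar p) (mvar q)) = kappa (mmul (mvar p') (mvar q')).
  by rewrite !kappa_mmul !kappa_mvar ep eq.
have hpp : (p' == p) = false.
  by apply/negbTE/eqP => h; move: e1; rewrite h => /n_Sn.
split.
  apply/simStE; split; first by rewrite ek.
  by rewrite !delta_mmul !delta_mvar e1 e2 addSn addnS.
right; split; first by rewrite ek.
exists p'; split.
  by rewrite !ffunE hpp eq_sym (negbTE hqp) eqxx.
move=> u hu.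
have up : (u == p) = false.
  have t1 : (tag p < tag p')%N = false by rewrite ep ltnn.
  apply/negbTE/eqP => h; move: hu; rewrite h /pos_lt t1 /= e1.
  by rewrite ltnNge leqnSn andbF.
have uq : (u == q) = false.
  by apply/negbTE/eqP => h; move: hu; rewrite h (negbTE hq).
have up' : (u == p') = false.
  by apply/negbTE/eqP => h; move: hu; rewrite h (negbTE (pos_lt_irr _)).
have uq' : (u == q') = false.
  apply/negbTE/eqP => h; move: hu hq; rewrite h /pos_lt.
  have -> : (tag q' < tag p')%N = (tag q < tag p')%N by rewrite eq.
  have -> : (tag q' == tag p') = (tag q == tag p') by rewrite eq.
  case: (tag q < tag p')%N => //= /andP [-> h2]; rewrite /=.
  by move: h2; rewrite e2 => h2; rewrite (ltn_trans (ltnSn _) h2).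
by rewrite !ffunE up uq up' uq'.
Qed.

Lemma cond2 r n (a : 'I_n -> vec r) (d : 'I_n -> nat)
    (ltM : mono 'I_n -> mono 'I_n -> Prop) (Lam : mono 'I_n * mono 'I_n -> Prop) :
  admissible ltM -> (forall k l : 'I_n, (k < l)%N -> ltM (mvar k) (mvar l)) ->
  (forall p, Lam p -> simS a p.1 p.2 /\ ltM p.2 p.1) ->
  forall pr, @Gamma1 n d Lam pr \/ @Gamma2 n d ltM pr \/ @Gamma3 n d pr ->
  simSt a pr.1 pr.2 /\ tlt ltM pr.2 pr.1.
Proof.
move=> adm hlt hL pr [G|[G|G]].
- case: G => hl hd.
  have [h1 h2] := hL _ hl; split; last by left.
  by apply/simStE; split.
- case: G => p [p' [q [q' [ep [eq [hm [e1 [e2 ->]]]]]]]].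
  have tl := ltM_tag adm hlt hm.
  apply: pair_ok => //.
    rewrite /pos_lt.
    have -> : (tag q < tag p')%N = false by rewrite -ep ltnNge (ltnW tl).
    by have -> : (tag q == tag p') = false by apply/negbTE; rewrite -ep neq_ltn tl orbT.
  by apply/eqP => h; move: tl; rewrite h -ep ltnn.
- case: G => p [p' [q [q' [ep [eq [eq' [e1 [e2 [hpq ->]]]]]]]]].
  have t1 : (tagged p' < tagged q)%N by rewrite -ltnS -e1 ltnS.
  apply: pair_ok => //; first by rewrite eq'.
    rewrite /pos_lt.
    have -> : (tag q < tag p')%N = false by rewrite eq ep ltnn.
    by rewrite ltnNge (ltnW t1) andbF.
  by apply/eqP => h; move: t1; rewrite h ltnn.
Qed.

Lemma tagged_le n (d : 'I_n -> nat) (q : tidx d) : (tagged q <= d (tag q))%N.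
Proof. exact: (ltn_ord (tagged q)). Qed.

Definition tdown n (d : 'I_n -> nat) (q : tidx d) : tidx d :=
  Tagged (fun k => 'I_(d k).+1) (inord (tagged q).-1 : 'I_(d (tag q)).+1).
Definition tup n (d : 'I_n -> nat) (q : tidx d) : tidx d :=
  Tagged (fun k => 'I_(d k).+1) (inord (tagged q).+1 : 'I_(d (tag q)).+1).

Lemma tdown_val n (d : 'I_n -> nat) (q : tidx d) :
  (tagged (tdown q) : nat) = (tagged q).-1.
Proof.
rewrite /tdown /= inordK //; apply: leq_ltn_trans (leq_pred _) (ltn_ord _).
Qed.

Lemma tup_val n (d : 'I_n -> nat) (q : tidx d) :
  (tagged q < d (tag q))%N -> (tagged (tup q) : nat) = (tagged q).+1.
Proof. by move=> h; rewrite /tup /= inordK. Qed.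

Lemma sum_le_one (T : finType) (P : pred T) (F : T -> nat) c :
  (forall t, P t -> (0 < F t)%N -> (F t <= c)%N) ->
  (forall t u, P t -> P u -> (0 < F t)%N -> (0 < F u)%N -> t = u) ->
  (\sum_(t | P t) F t <= c)%N.
Proof.
move=> h1 h2.
case: (pickP (fun t => P t && (0 < F t)%N)) => [t /andP [Pt Ft]|none].
  rewrite (bigD1 t) //= big1 ?addn0; first exact: h1.
  move=> u /andP [Pu ut]; case: (posnP (F u)) => // Fu.
  by move: ut; rewrite (h2 _ _ Pu Pt Fu Ft) eqxx.
rewrite big1 // => u Pu; move: (none u); rewrite Pu /=.
by case: (F u).
Qed.

Lemma mdiv_pair n (d : 'I_n -> nat) (p q : tidx d) (z : mono (tidx d)) :
  (0 < z p)%N -> (0 < z q)%N -> (p = q -> (1 < z p)%N) ->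
  mdiv (mmul (mvar p) (mvar q)) z.
Proof.
move=> hp hq hpq t; rewrite !ffunE.
case: (eqVneq t p) => [->|tp]; case: (eqVneq p q) => [e|pq].
- exact: hpq.
- by rewrite addn0.
- by rewrite add0n; case: eqP => // ->.
- by rewrite add0n; case: eqP => // ->.
Qed.

Lemma no_G2 n (d : 'I_n -> nat) (ltM : mono 'I_n -> mono 'I_n -> Prop) z :
  (forall k l : 'I_n, (k < l)%N -> ltM (mvar k) (mvar l)) ->
  (forall pr, @Gamma2 n d ltM pr -> ~ mdiv pr.1 z) ->
  forall p q : tidx d, (tag p < tag q)%N -> (0 < tagged p)%N ->
  (tagged q < d (tag q))%N -> (0 < z p)%N -> (0 < z q)%N -> False.
Proof.
move=> hlt hz p q tpq p0 qd zp zq.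
apply: (hz (mmul (mvar p) (mvar q), mmul (mvar (tdown p)) (mvar (tup q)))).
  exists p, (tdown p), q, (tup q); do 2 (split; first by []).
  split; first exact: hlt.
  split; first by have := tdown_val p; rewrite /= => ->; rewrite prednK.
  by split; first by have := tup_val qd; rewrite /= => ->.
by apply: mdiv_pair => // e; move: tpq; rewrite e ltnn.
Qed.

Lemma no_G3 n (d : 'I_n -> nat) z :
  (forall pr, @Gamma3 n d pr -> ~ mdiv pr.1 z) ->
  forall p q : tidx d, tag q = tag p -> (0 < tagged p)%N ->
  (tagged p <= tagged q)%N ->
  (tagged q < d (tag q))%N -> (0 < z p)%N -> (0 < z q)%N ->
  (p = q -> (1 < z p)%N) -> False.
Proof.
move=> hz p q tqp p0 pq qd zp zq hpq.
apply: (hz (mmul (mvar p) (mvar q), mmul (mvar (tdown p)) (mvar (tup q)))).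
  exists p, (tdown p), q, (tup q); do 3 (split; first by []).
  split; first by have := tdown_val p; rewrite /= => ->; rewrite prednK.
  by split; first by have := tup_val qd; rewrite /= => ->.
exact: mdiv_pair.
Qed.

Lemma Hsum n (d : 'I_n -> nat) (la : mono (tidx d)) :
  \sum_(q : tidx d) (d (tag q) - tagged q) * la q + delta la =
  \sum_k d k * kappa la k.
Proof.
rewrite -sum_tag /delta -big_split; apply: eq_bigr => q _ /=.
by rewrite -mulnDl subnK // tagged_le.
Qed.

Lemma case2 n (d : 'I_n -> nat) (ltM : mono 'I_n -> mono 'I_n -> Prop)
    (z w : mono (tidx d)) :
  (forall k l : 'I_n, (k < l)%N -> ltM (mvar k) (mvar l)) ->
  (forall pr, @Gamma2 n d ltM pr -> ~ mdiv pr.1 z) ->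
  (forall pr, @Gamma3 n d pr -> ~ mdiv pr.1 z) ->
  kappa w = kappa z -> delta w = delta z -> lex_gt w z -> False.
Proof.
move=> hlt hz2 hz3 ek ed [p0 [zw hpre]].
have [q1 [tq1 [iq1 zq1]]] : exists q1 : tidx d, tag q1 = tag p0 /\
    (tagged p0 < tagged q1)%N /\ (0 < z q1)%N.
  case: (pickP (fun q : tidx d => (tag q == tag p0) && (tagged p0 < tagged q)%N
                       && (0 < z q)%N)) => [q /andP[/andP[/eqP h1 h2] h3]|none].
    by exists q.
  exfalso.
  have : (kappa z (tag p0) < kappa w (tag p0))%N.
    rewrite !kappaE (bigD1 p0) //= [X in (_ < X)%N](bigD1 p0) //=.
    rewrite -addSn; apply: leq_add => //; apply: leq_sum => q /andP [tq qp].
    case: (ltngtP (tagged q) (tagged p0)) => h.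
    - by rewrite hpre // /pos_lt tq h orbT.
    - by have := none q; rewrite tq h /= => /negbT; rewrite -leqNgt leqn0 => /eqP ->.
    - by move: qp; rewrite (tidx_eq (eqP tq) h) eqxx.
  by rewrite ek ltnn.
have eH : \sum_(q : tidx d) (d (tag q) - tagged q) * w q =
          \sum_(q : tidx d) (d (tag q) - tagged q) * z q.
  apply/(@addIn (delta z)); rewrite -{1}ed !Hsum ek //.
have dq1 : d (tag q1) = d (tag p0) by rewrite tq1.
have hq1 := tagged_le q1.
have key : forall t : tidx d, t != p0 -> ~~ pos_lt t p0 ->
    (0 < (d (tag t) - tagged t) * z t)%N ->
    [/\ tag t = tag p0, (tagged p0 < tagged t)%N, (tagged t < d (tag t))%N &
        (0 < z t)%N].
  move=> t tp nlt; rewrite muln_gt0 => /andP [ht zt].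
  rewrite subn_gt0 in ht.
  case: (ltngtP (tag t) (tag p0)) => c.
  - by move: nlt; rewrite /pos_lt c.
  - exfalso; apply: (no_G2 hlt hz2 (p := q1) (q := t)) => //.
      by rewrite tq1.
    by apply: leq_ltn_trans iq1.
  - have ct : tag t = tag p0 by apply: val_inj.
    move: nlt; rewrite /pos_lt.
    have -> : (tag t < tag p0)%N = false by rewrite c ltnn.
    have -> : (tag t == tag p0) = true by rewrite ct eqxx.
    rewrite /= -leqNgt leq_eqVlt => /orP [/eqP e|->] //.
    by move: tp; rewrite (tidx_eq (esym ct) e) eqxx.
have Eb : (\sum_(q | (q != p0) && ~~ pos_lt q p0) (d (tag q) - tagged q) * z q
           <= (d (tag p0) - tagged p0) - 1)%N.
  apply: sum_le_one.
  - move=> t /andP [tp nlt] pos; have [e1 e2 e3 e4] := key t tp nlt pos.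
    have zt1 : z t = 1.
      case: (ltngtP (z t) 1) => // h.
        by rewrite ltnNge e4 in h.
      exfalso; apply: (no_G3 hz3 (p := t) (q := t)) => //.
      exact: leq_ltn_trans e2.
    have dt : d (tag t) = d (tag p0) by rewrite e1.
      rewrite zt1 muln1; move: e2 e3 dt; move: (nat_of_ord (tagged t)) (nat_of_ord (tagged p0)) => x y; move: (d (tag t)) (d (tag p0)) => u v. lia.
  - move=> t u /andP [tp nlt] /andP [up nlu] pt pu.
    have [e1 e2 e3 e4] := key t tp nlt pt.
    have [f1 f2 f3 f4] := key u up nlu pu.
    case: (eqVneq t u) => // tu; exfalso.
    case: (leqP (tagged t) (tagged u)) => h.
      apply: (no_G3 hz3 (p := t) (q := u)) => //; first by rewrite e1 f1.
        exact: (leq_ltn_trans (leq0n _) e2).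
      by move=> e; move: tu; rewrite e eqxx.
    apply: (no_G3 hz3 (p := u) (q := t)) => //; first by rewrite e1 f1.
      exact: (leq_ltn_trans (leq0n _) f2).
      exact: ltnW.
    by move=> e; move: tu; rewrite e eqxx.
move: eH; rewrite (bigD1 p0) //= (bigID (fun q => pos_lt q p0)) /=.
rewrite [X in _ = X](bigD1 p0) //= [X in _ = _ + X](bigID (fun q => pos_lt q p0)) /=.
have -> : \sum_(i | (i != p0) && pos_lt i p0) (d (tag i) - tagged i) * w i =
          \sum_(i | (i != p0) && pos_lt i p0) (d (tag i) - tagged i) * z i.
  by apply: eq_bigr => q /andP [_ /hpre ->].
have hp0 : (0 < d (tag p0) - tagged p0)%N by lia.
have hm : ((d (tag p0) - tagged p0) * (z p0).+1 <= (d (tag p0) - tagged p0) * w p0)%N.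
  by rewrite leq_mul2l zw orbT.
rewrite mulnS in hm.
move: hm Eb hp0.
set A := d (tag p0) - tagged p0.
set M := \sum_(i | (i != p0) && pos_lt i p0) _.
set E := \sum_(i | (i != p0) && ~~ pos_lt i p0) (d (tag i) - tagged i) * z i.
set E' := \sum_(i | (i != p0) && ~~ pos_lt i p0) (d (tag i) - tagged i) * w i.
move: (A * w p0) (A * z p0) => X Y.
clearbody A M E E'.
lia.
Qed.

Lemma sub_sum (T : finType) (P : pred T) (u : T -> nat) c :
  (c <= \sum_(t | P t) u t)%N ->
  exists v : T -> nat, (forall t, v t <= u t)%N /\ \sum_(t | P t) v t = c.
Proof.
elim: c => [|c IH] h.
  by exists (fun _ => 0%N); split => //; rewrite big1.
have [v [hv sv]] := IH (ltnW h).
case: (pickP (fun t => P t && (v t < u t)%N)) => [t /andP [Pt lt]|none].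
  exists (fun s => v s + nat_of_bool (s == t))%N; split.
    by move=> s; case: eqP => [->|_]; rewrite ?addn1 ?addn0.
  by rewrite big_split /= sv sum_eq1 Pt addn1.
exfalso; move: h; rewrite -sv ltnNge => /negP; apply.
apply: leq_sum => t Pt; move: (none t); rewrite Pt /= => /negbT.
by rewrite -leqNgt.
Qed.

Lemma sub_kappa n (d : 'I_n -> nat) (c : mono 'I_n) (z : mono (tidx d)) :
  mdiv c (kappa z) -> exists la : mono (tidx d), mdiv la z /\ kappa la = c.
Proof.
move=> hc.
have : forall k, exists v : tidx d -> nat, (forall t, v t <= z t)%N /\
    \sum_(t : tidx d | tag t == k) v t = c k.
  by move=> k; apply: sub_sum; rewrite -kappaE; exact: hc.
case/fin_all_exists => V hV.
exists [ffun p => V (tag p) p]; split.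
  by move=> t; rewrite ffunE; exact: (hV _).1.
apply/ffunP => k; rewrite kappaE -(hV k).2.
by apply: eq_bigr => p /eqP <-; rewrite ffunE.
Qed.

Lemma delta_le n (d : 'I_n -> nat) (la : mono (tidx d)) :
  (delta la <= \sum_k d k * kappa la k)%N.
Proof.
rewrite -sum_tag; apply: leq_sum => p _; exact: leq_mul (tagged_le p) (leqnn _).
Qed.

Lemma mmul_split n (d : 'I_n -> nat) (mu : mono (tidx d)) p :
  (0 < mu p)%N -> mu = mmul [ffun q => mu q - nat_of_bool (q == p)] (mvar p).
Proof.
move=> h; apply/ffunP => q; rewrite !ffunE.
case: (eqVneq q p) => [->|_] /=; first by rewrite subnK.
by rewrite subn0 addn0.
Qed.

Lemma mu_exists n (d : 'I_n -> nat) (c : mono 'I_n) e :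
  (e <= \sum_k d k * c k)%N ->
  exists mu : mono (tidx d), kappa mu = c /\ delta mu = e.
Proof.
elim: e => [|e IH] h.
  pose base (k : 'I_n) : tidx d := Tagged (fun k => 'I_(d k).+1) (ord0 : 'I_(d k).+1).
  exists [ffun p => c (tag p) * nat_of_bool (p == base (tag p))]; split.
    apply/ffunP => k; rewrite kappaE.
    rewrite (eq_bigr (fun p => c k * nat_of_bool (p == base k))).
      by rewrite -big_distrr sum_eq1 /= eqxx muln1.
    by move=> p /eqP tp; rewrite ffunE tp.
  rewrite /delta big1 // => p _; rewrite ffunE.
  case: eqP => [e|_]; last by rewrite !muln0.
  by rewrite e /= mul0n.
have [mu [kmu dmu]] := IH (ltnW h).
case: (pickP (fun p => (0 < mu p)%N && (tagged p < d (tag p))%N)) =>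
    [p /andP [mp tp]|none].
  set nu := [ffun q => mu q - nat_of_bool (q == p)].
  have emu := mmul_split mp.
  exists (mmul nu (mvar (tup p))); split.
    by rewrite -kmu [in RHS]emu !kappa_mmul !kappa_mvar.
  rewrite -addn1 -dmu [in RHS]emu !delta_mmul !delta_mvar tup_val //.
  by rewrite addnS addn1.
exfalso; move: h; rewrite -kmu -sum_tag -dmu ltnNge => /negP; apply.
apply: leq_sum => p _; move: (none p) => /=.
case: (posnP (mu p)) => [->|mp]; first by rewrite !muln0.
move=> /= /negbT; rewrite -leqNgt => hp.
exact: leq_mul hp (leqnn _).
Qed.

Lemma deg_evalS r (S : vec r -> Prop) (deg : vec r -> nat) n (a : 'I_n -> vec r) :
  submonoid S -> grading S deg -> (forall k, S (a k)) ->
  forall c : mono 'I_n, S (evalS a c) /\ deg (evalS a c) = \sum_k c k * deg (a k).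
Proof.
move=> [S0 Sadd] gr Sa c.
have deg0 : deg 0%R = 0.
  have := gr _ _ S0 S0; rewrite GRing.addr0.
  move: (deg 0%R) => x; lia.
have mulS : forall x m, S x -> S (x *+ m)%R /\ deg (x *+ m)%R = m * deg x.
  move=> x m Sx; elim: m => [|m [Sm dm]]; first by rewrite GRing.mulr0n.
  rewrite GRing.mulrS; split; first exact: Sadd.
  by rewrite gr // dm mulSn.
rewrite /evalS; apply: (big_rec2 (fun x y => S x /\ deg x = y)) => //.
move=> i y1 y2 _ [Sy dy]; have [Sm dm] := mulS (a i) (c i) (Sa i).
by split; [exact: Sadd | rewrite gr // dm dy].
Qed.

Lemma case1 r n (a : 'I_n -> vec r) (d : 'I_n -> nat)
    (ltM : mono 'I_n -> mono 'I_n -> Prop) (Lam : mono 'I_n * mono 'I_n -> Prop)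
    (z w : mono (tidx d)) :
  groebner_system ltM (simS a) Lam ->
  (forall c1 c2, simS a c1 c2 -> \sum_k d k * c1 k = \sum_k d k * c2 k) ->
  (forall pr, @Gamma1 n d Lam pr -> ~ mdiv pr.1 z) ->
  simS a (kappa z) (kappa w) -> ~ ltM (kappa w) (kappa z).
Proof.
case=> _ hL2 hL3 hdeg hz sim; apply: (hL3 (kappa z)) => //.
move=> [c1 c2] /= hl hdiv.
have [la [dla kla]] := sub_kappa hdiv.
have [mu [kmu dmu]] : exists mu : mono (tidx d), kappa mu = c2 /\ delta mu = delta la.
  apply: mu_exists; rewrite -(hdeg _ _ (hL2 _ hl).1) -kla; exact: delta_le.
by apply: (hz (la, mu)) => //; split => /=; rewrite ?kla ?kmu.
Qed.

Definition dec (P : Prop) : bool :=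
  if excluded_middle_informative P then true else false.

Lemma decP (P : Prop) : dec P <-> P.
Proof. by rewrite /dec; case: excluded_middle_informative. Qed.

Lemma fin_bounded (T : finType) (U : mono T * mono T -> Prop) B :
  (forall pr, U pr -> forall q, pr.1 q <= B /\ pr.2 q <= B)%N ->
  exists s : seq (mono T * mono T), forall p, U p <-> p \in s.
Proof.
move=> hB.
pose conv (f : {ffun T -> 'I_B.+1}) : mono T := [ffun q => nat_of_ord (f q)].
pose cand := map (fun f : {ffun T -> 'I_B.+1} * {ffun T -> 'I_B.+1} =>
                    (conv f.1, conv f.2)) (enum {: {ffun T -> 'I_B.+1} * {ffun T -> 'I_B.+1}}).
exists [seq pr <- cand | dec (U pr)] => p; rewrite mem_filter; split.
  move=> Up; apply/andP; split; first by apply/decP.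
  have e : forall m : mono T, (forall q, m q <= B)%N ->
      m = conv [ffun q => inord (m q)].
    by move=> m hm; apply/ffunP => q; rewrite !ffunE inordK // ltnS.
  case: p Up => m1 m2 Up.
  rewrite (e m1 (fun q => (hB _ Up q).1)) (e m2 (fun q => (hB _ Up q).2)).
  apply: (map_f (fun f : {ffun T -> 'I_B.+1} * {ffun T -> 'I_B.+1} =>
                    (conv f.1, conv f.2)) (x := ([ffun q => inord (m1 q)], [ffun q => inord (m2 q)]))).
  by rewrite mem_enum.
by case/andP => /decP.
Qed.

Lemma le_kappa n (d : 'I_n -> nat) (la : mono (tidx d)) q :
  (la q <= kappa la (tag q))%N.
Proof. by rewrite kappaE (bigD1 q) //= leq_addr. Qed.

Lemma le_sum_kappa n (c : mono 'I_n) k : (c k <= \sum_l c l)%N.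
Proof. by rewrite (bigD1 k) //= leq_addr. Qed.

Lemma le_pair n (d : 'I_n -> nat) (p q t : tidx d) :
  (mmul (mvar p) (mvar q) t <= 2)%N.
Proof. by rewrite !ffunE; case: (t == p); case: (t == q). Qed.

Theorem theorem5p3 (r : nat) (S : vec r -> Prop) (deg : vec r -> nat)
  (n : nat) (a : 'I_n -> vec r)
  (ltM : mono 'I_n -> mono 'I_n -> Prop)
  (Lam : mono 'I_n * mono 'I_n -> Prop) :
  affine_monoid S -> reduced S -> grading S deg ->
  injective a ->
  (forall k, is_atom S (a k)) ->
  (forall b, is_atom S b -> exists k, a k = b) ->
  admissible ltM ->
  (forall k l : 'I_n, (k < l)%N -> ltM (mvar k) (mvar l)) ->
  groebner_system ltM (simS a) Lam ->
  groebner_system (@tlt n (fun k => deg (a k)) ltM)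
    (@simSt r n a (fun k => deg (a k)))
    (fun pr => @Gamma1 n (fun k => deg (a k)) Lam pr \/
               @Gamma2 n (fun k => deg (a k)) ltM pr \/
               @Gamma3 n (fun k => deg (a k)) pr).
Proof.
move=> [hSm _] _ gr _ hat _ adm hlt hG.
have hG' := hG; case: hG' => [[s0 hs0] hL2 hL3].
have hdeg : forall c1 c2, simS a c1 c2 ->
    \sum_k deg (a k) * c1 k = \sum_k deg (a k) * c2 k.
  move=> c1 c2 e.
  have [_ h1] := deg_evalS hSm gr (fun k => (hat k).1) c1.
  have [_ h2] := deg_evalS hSm gr (fun k => (hat k).1) c2.
  rewrite /simS in e.
  transitivity (\sum_k c1 k * deg (a k)); first by apply: eq_bigr => k _; rewrite mulnC.
  rewrite -h1 e h2; by apply: eq_bigr => k _; rewrite mulnC.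
split.
- apply: (fin_bounded (B := (\max_(x <- s0) (\sum_k x.1 k + \sum_k x.2 k) + 2)%N)).
  move=> pr [G|[G|G]] q.
  + case: G => hl _.
    have mem := (hs0 _).1 hl.
    have hm := leq_bigmax_seq (F := fun x : mono 'I_n * mono 'I_n =>
                 (\sum_k x.1 k + \sum_k x.2 k)%N) (P := xpredT) _ mem isT.
    move: hm => /= hm.
    split.
    * apply: leq_trans (le_kappa _ q) _; apply: leq_trans (le_sum_kappa _ (tag q)) _.
      apply: leq_trans (leq_trans (leq_addr _ _) hm) (leq_addr _ _).
    * apply: leq_trans (le_kappa _ q) _; apply: leq_trans (le_sum_kappa _ (tag q)) _.
      apply: leq_trans (leq_trans (leq_addl _ _) hm) (leq_addr _ _).
  + case: G => p [p' [q0 [q' [_ [_ [_ [_ [_ ->]]]]]]]] /=.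
    by split; apply: leq_trans (le_pair _ _ _) (leq_addl _ _).
  + case: G => p [p' [q0 [q' [_ [_ [_ [_ [_ [_ ->]]]]]]]]] /=.
    by split; apply: leq_trans (le_pair _ _ _) (leq_addl _ _).
- exact: cond2.
- move=> z hz w sim htlt.
  have [e1 e2] := (simStE _ _ _).1 sim.
  case: htlt => [hl|[ek hlex]].
  + by apply: (case1 hG hdeg _ e1 hl) => pr g; apply: hz; left.
  + apply: (case2 hlt _ _ ek (esym e2) hlex) => pr g; apply: hz; right.
      by left.
    by right.
Qed.
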